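(* Let $\alpha>0$, $A\ge0$, $B>0$, $t>0$, and let $P_n(x,t)$ be the monic polynomials orthogonal on $[0,\infty)$ w.r.t. $w(x,t)=x^\alpha e^{-x}(A+B\theta(x-t))$, with norms $h_n(t)$ and recurrence $zP_n=P_{n+1}+\alpha_nP_n+\beta_nP_{n-1}$, $\beta_n=h_n/h_{n-1}$. Let $R_n(t)=Bt^\alpha e^{-t}\{P_n(t,t)\}^2/h_n(t)$ and $r_n(t)=Bt^\alpha e^{-t}P_n(t,t)P_{n-1}(t,t)/h_{n-1}(t)$. Then for fixed $t$ and $n\ge1$: $$r_n^2=\beta_nR_nR_{n-1},$$ $$(n+r_n)(n+\alpha+r_n)=\beta_n(1-R_n)(1-R_{n-1}),$$ $$\sum_{j=0}^{n-1}R_j+r_n\left[1-\frac{\alpha}{t}-\frac{2(n+r_n)}{t}\right]=\frac{\beta_n}{t}\left[(1-R_n)R_{n-1}+(1-R_{n-1})R_n\right].$$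
   Context: $\theta$ is the Heaviside function ($1$ for $x>0$, $0$ otherwise); $P_n(t,t)$ is $P_n(x,t)$ at $x=t$. *)

(* Defs.v *)
From Stdlib Require Import Reals.
From Coquelicot Require Import Coquelicot.
Open Scope R_scope.

Definition theta (x : R) : R := if Rlt_dec 0 x then 1 else 0.

Definition rpow (x a : R) : R := if Rlt_dec 0 x then Rpower x a else 0.

Definition weight (alpha A B t x : R) : R :=
  rpow x alpha * exp (- x) * (A + B * theta (x - t)).

Fixpoint lsum (f : nat -> R) (n : nat) : R :=
  match n with O => 0 | S m => lsum f m + f m end.

Definition monicP (c : nat -> nat -> R) (n : nat) (x : R) : R :=
  x ^ n + lsum (fun k => c n k * x ^ k) n.

Definition orthonormed (alpha A B t : R) (c : nat -> nat -> R) (h : nat -> R) : Prop :=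
  forall n m : nat,
    is_RInt_gen (fun x => monicP c n x * monicP c m x * weight alpha A B t x)
      (at_point 0) (Rbar_locally p_infty)
      (if Nat.eqb n m then h n else 0).

Definition betan (h : nat -> R) (n : nat) : R := h n / h (n - 1)%nat.

Definition RR_n (alpha B t : R) (c : nat -> nat -> R) (h : nat -> R) (n : nat) : R :=
  B * rpow t alpha * exp (- t) * (monicP c n t) ^ 2 / h n.

Definition rr_n (alpha B t : R) (c : nat -> nat -> R) (h : nat -> R) (n : nat) : R :=
  B * rpow t alpha * exp (- t) * monicP c n t * monicP c (n - 1)%nat t / h (n - 1)%nat.

(* Main.v *)
Require Import Defs.
From Stdlib Require Import Reals.
From Coquelicot Require Import Coquelicot.
Open Scope R_scope.
From Stdlib Require Import Lra Lia.

Module Ana.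

Lemma rpow_le0 x a : x <= 0 -> rpow x a = 0.
Proof. intros H; unfold rpow; destruct (Rlt_dec 0 x); lra. Qed.
Lemma rpow_gt0 x a : 0 < x -> rpow x a = Rpower x a.
Proof. intros H; unfold rpow; destruct (Rlt_dec 0 x); lra. Qed.
Lemma rpow_nonneg x a : 0 <= rpow x a.
Proof. unfold rpow; destruct (Rlt_dec 0 x); [unfold Rpower; left; apply exp_pos | lra]. Qed.
Lemma rpow_mulpow x a k : rpow x (a + INR k) = x ^ k * rpow x a.
Proof.
destruct (Rlt_dec 0 x) as [H|H].
- rewrite !rpow_gt0 by lra. rewrite Rpower_plus, Rpower_pow by lra. ring.
- rewrite !rpow_le0 by lra. ring.
Qed.

Lemma rpow_small a : 0 < a -> forall eps, 0 < eps ->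
  exists d, 0 < d /\ forall y, Rabs y < d -> Rabs (rpow y a) < eps.
Proof.
intros Ha eps He. exists (Rpower eps (/ a)). split.
- unfold Rpower; apply exp_pos.
- intros y Hy. destruct (Rlt_dec 0 y) as [Hy0|Hy0].
  + rewrite rpow_gt0 by lra. rewrite Rabs_pos_eq in Hy by lra.
    rewrite Rabs_pos_eq by (unfold Rpower; left; apply exp_pos).
    apply Rlt_le_trans with (Rpower (Rpower eps (/ a)) a).
    * apply Rlt_Rpower_l; lra.
    * rewrite Rpower_mult, Rinv_l, Rpower_1; lra.
  + rewrite rpow_le0 by lra. rewrite Rabs_R0; lra.
Qed.

Lemma rpow_der_pos a x : 0 < x -> is_derive (fun y => rpow y a) x (a * rpow x (a - 1)).
Proof.
intros Hx. rewrite rpow_gt0 by lra.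
apply (is_derive_ext_loc (fun y => Rpower y a)).
- apply (locally_interval _ x 0 p_infty); simpl; auto.
  intros y Hy _; rewrite rpow_gt0; auto.
- apply is_derive_Reals, derivable_pt_lim_power; auto.
Qed.

Lemma rpow_loc0 a x : x < 0 -> locally x (fun y => 0 = rpow y a).
Proof.
intros Hx. apply (locally_interval _ x m_infty 0); simpl; auto.
intros y _ Hy; rewrite rpow_le0; lra.
Qed.

Lemma rpow_cont a : 0 < a -> forall x, continuous (fun y => rpow y a) x.
Proof.
intros Ha x. destruct (Rtotal_order x 0) as [Hx|[Hx|Hx]].
- apply (continuous_ext_loc _ (fun _ => 0)).
  + apply rpow_loc0; auto.
  + apply continuous_const.
- subst x. apply continuity_pt_filterlim.
  intros eps He. destruct (rpow_small a Ha eps He) as [d [Hd H]].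
  exists d; split; auto. intros y [_ Hy].
  simpl in *. unfold R_dist in *. rewrite (rpow_le0 0) by lra. rewrite Rminus_0_r in *. auto.
- apply (ex_derive_continuous (K := R_AbsRing) (V := R_NormedModule) (fun y => rpow y a)). eexists. apply rpow_der_pos; auto.
Qed.

Lemma rpow_der a : 1 < a -> forall x, is_derive (fun y => rpow y a) x (a * rpow x (a - 1)).
Proof.
intros Ha x. destruct (Rtotal_order x 0) as [Hx|[Hx|Hx]].
- rewrite rpow_le0 by lra. rewrite Rmult_0_r.
  apply (is_derive_ext_loc (fun _ => 0)).
  + apply rpow_loc0; auto.
  + apply (is_derive_const (K := R_AbsRing) (V := R_NormedModule) 0).
- subst x. rewrite rpow_le0 by lra. rewrite Rmult_0_r.
  apply is_derive_Reals. intros eps He.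
  destruct (rpow_small (a - 1) ltac:(lra) eps He) as [d [Hd H]].
  exists (mkposreal d Hd). intros y Hy0 Hyd. simpl in Hyd.
  rewrite Rplus_0_l, (rpow_le0 0) by lra.
  destruct (Rlt_dec 0 y) as [Hy|Hy].
  + rewrite rpow_gt0 by lra.
    replace (Rpower y a) with (Rpower y (a - 1) * y).
    * replace ((Rpower y (a - 1) * y - 0) / y - 0) with (Rpower y (a - 1)) by (field; lra).
      rewrite <- rpow_gt0 by lra. auto.
    * rewrite <- (Rpower_1 y) at 2 by lra. rewrite <- Rpower_plus. f_equal; ring.
  + rewrite rpow_le0 by lra. replace ((0 - 0) / y - 0) with 0 by (field; lra). rewrite Rabs_R0; lra.
- apply rpow_der_pos; auto.
Qed.

Lemma exp_lower x N : 0 <= x -> x ^ (S N) / INR (Factorial.fact (S N)) <= exp x.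
Proof.
intros Hx. eapply Rle_trans; [|apply (exp_ge_taylor x (S N) Hx)].
rewrite tech5. assert (0 <= sum_f_R0 (fun k => x ^ k / INR (Factorial.fact k)) N).
{ apply cond_pos_sum. intros n. apply Rmult_le_pos. apply pow_le; auto.
  left; apply Rinv_0_lt_compat, INR_fact_lt_0. }
lra.
Qed.

Lemma ball0 (eps : posreal) y : Rabs y < eps -> ball 0 eps y.
Proof.
intros H. unfold ball; simpl; unfold AbsRing_ball, abs, minus, plus, opp; simpl.
rewrite Ropp_0, Rplus_0_r. auto.
Qed.

Lemma rpow_exp_lim a : filterlim (fun x => rpow x a * exp (- x)) (Rbar_locally p_infty) (locally 0).
Proof.
destruct (INR_archimed 1 a ltac:(lra)) as [N HN]. rewrite Rmult_1_r in HN.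
set (F := INR (Factorial.fact (S N))).
assert (HF : 0 < F) by apply INR_fact_lt_0.
apply filterlim_locally. intros eps.
exists (Rmax 1 (F / eps)). intros x Hx.
assert (H1 : 1 < x) by (eapply Rle_lt_trans; [apply Rmax_l|apply Hx]).
assert (H2 : F / eps < x) by (eapply Rle_lt_trans; [apply Rmax_r|apply Hx]).
apply ball0.
assert (Hr : rpow x a <= x ^ N).
{ rewrite rpow_gt0 by lra. rewrite <- Rpower_pow by lra. apply Rle_Rpower; lra. }
assert (He := exp_lower x N ltac:(lra)). fold F in He.
assert (Hxn : 0 < x ^ N) by (apply pow_lt; lra).
assert (Hex : 0 < exp x) by apply exp_pos.
rewrite exp_Ropp.
assert (0 <= rpow x a) by apply rpow_nonneg.
rewrite Rabs_pos_eq by (apply Rmult_le_pos; [auto| left; apply Rinv_0_lt_compat; auto]).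
apply Rle_lt_trans with (x ^ N / exp x).
{ unfold Rdiv; apply Rmult_le_compat_r; [left; apply Rinv_0_lt_compat; auto | auto]. }
apply Rle_lt_trans with (x ^ N / (x ^ S N / F)).
{ apply Rmult_le_compat_l; [lra|]. apply Rinv_le_contravar; auto.
  apply Rdiv_lt_0_compat; auto. apply pow_lt; lra. }
replace (x ^ N / (x ^ S N / F)) with (F / x) by (simpl; field; lra).
apply Rlt_div_l in H2; [|apply cond_pos].
apply Rlt_div_l; lra.
Qed.

Lemma theta_pos x : 0 < x -> theta x = 1.
Proof. intros; unfold theta; destruct (Rlt_dec 0 x); lra. Qed.
Lemma theta_nonpos x : x <= 0 -> theta x = 0.
Proof. intros; unfold theta; destruct (Rlt_dec 0 x); lra. Qed.

Lemma filterlim_at_point_id (f : R -> R) a : filterlim f (at_point a) (locally (f a)).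
Proof. intros P HP. unfold filtermap, at_point. apply locally_singleton; auto. Qed.

Lemma is_RInt_gen_exteq (f g : R -> R) Fa Fb {FFa : Filter Fa} {FFb : Filter Fb} l :
  (forall x, f x = g x) -> is_RInt_gen f Fa Fb l -> is_RInt_gen g Fa Fb l.
Proof.
intros H. apply is_RInt_gen_ext. apply filter_forall. intros ab x _. auto.
Qed.

Section Moments.
Variables (alpha A B t : R).
Hypothesis Ha : 0 < alpha.
Hypothesis Ht : 0 < t.

Lemma moment_rec (mu : nat -> R) k :
  (forall j, is_RInt_gen (fun x => x ^ j * weight alpha A B t x) (at_point 0) (Rbar_locally p_infty) (mu j)) ->
  mu (S k) = (INR k + alpha + 1) * mu k + B * rpow t alpha * exp (- t) * t ^ (S k).
Proof.
intros Hmu.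
set (g := alpha + INR k + 1).
assert (Hg : 1 < g) by (unfold g; generalize (pos_INR k); lra).
set (G := fun x => rpow x g * exp (- x)).
set (dG := fun x => (g * rpow x (g - 1) - rpow x g) * exp (- x)).
assert (HG : forall x, is_derive G x (dG x)).
{ intros x.
  pose proof (rpow_der g Hg x) as H1.
  assert (H2 : is_derive (fun y => exp (- y)) x (- exp (- x))) by (auto_derive; [auto|ring]).
  pose proof (is_derive_mult _ _ _ _ _ H1 H2 Rmult_comm) as H3.
  replace (dG x) with (plus (mult (g * rpow x (g - 1)) (exp (- x))) (mult (rpow x g) (- exp (- x)))).
  - exact H3.
  - unfold dG, plus, mult; simpl; ring. }
assert (HdG : forall x, continuous dG x).
{ intros x. unfold dG.
  apply (continuous_mult (fun y => g * rpow y (g - 1) - rpow y g) (fun y => exp (- y))).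
  - apply (continuous_minus (fun y => g * rpow y (g - 1)) (fun y => rpow y g)).
    + apply (continuous_mult (fun _ => g) (fun y => rpow y (g - 1))).
      * apply continuous_const.
      * apply rpow_cont; lra.
    + apply rpow_cont; lra.
  - apply (ex_derive_continuous (K:=R_AbsRing) (V:=R_NormedModule) (fun y => exp (- y))). auto_derive. auto. }
assert (HI : forall x, (INR k + alpha + 1) * (x ^ k * weight alpha A B t x) - x ^ (S k) * weight alpha A B t x
                       = dG x * (A + B * theta (x - t))).
{ intros x. unfold dG, weight.
  replace (g - 1) with (alpha + INR k) by (unfold g; ring).
  replace g with (alpha + INR (S k)) at 2 by (unfold g; rewrite S_INR; ring).
  rewrite !rpow_mulpow. unfold g. ring. }
assert (P1 : is_RInt (fun x => dG x * (A + B * theta (x - t))) 0 t (A * G t)).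
{ pose proof (is_RInt_derive G dG 0 t (fun x _ => HG x) (fun x _ => HdG x)) as H.
  pose proof (is_RInt_scal _ _ _ A _ H) as H'.
  apply (is_RInt_ext (fun y => scal A (dG y))).
  - intros x Hx. rewrite Rmin_left, Rmax_right in Hx by lra.
    rewrite theta_nonpos by lra. unfold scal; simpl; unfold mult; simpl; ring.
  - replace (A * G t) with (scal A (minus (G t) (G 0))); auto.
    unfold G. rewrite (rpow_le0 0) by lra. unfold scal, minus, plus, opp; simpl; unfold mult; simpl; ring. }
assert (P2 : is_RInt_gen (fun x => dG x * (A + B * theta (x - t))) (at_point t) (Rbar_locally p_infty)
               ((A + B) * (0 - G t))).
{ assert (H : is_RInt_gen (Derive G) (at_point t) (Rbar_locally p_infty) (0 - G t)).
  { apply is_RInt_gen_Derive.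
    - apply filter_forall. intros ab x _. eexists; apply HG.
    - apply filter_forall. intros ab x _.
      apply (continuous_ext dG). intros y; symmetry; apply is_derive_unique, HG. apply HdG.
    - apply filterlim_at_point_id.
    - apply rpow_exp_lim. }
  pose proof (is_RInt_gen_scal _ (A + B) _ H) as H'.
  apply (is_RInt_gen_ext (fun y => scal (A + B) (Derive G y))); auto.
  apply Filter_prod with (fun a => a = t) (fun b => t < b).
  - reflexivity.
  - exists t. auto.
  - intros a b Hat Hb x Hx. simpl in Hx. subst a.
    rewrite Rmin_left, Rmax_right in Hx by lra.
    rewrite theta_pos by lra. rewrite (is_derive_unique _ _ _ (HG x)).
    unfold scal; simpl; unfold mult; simpl; ring. }
pose proof (is_RInt_gen_Chasles _ t _ _ (proj2 (is_RInt_gen_at_point _ _ _ _) P1) P2) as HC.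
pose proof (is_RInt_gen_minus _ _ _ _ (is_RInt_gen_scal _ (INR k + alpha + 1) _ (Hmu k)) (Hmu (S k))) as HL.
pose proof (is_RInt_gen_exteq _ _ _ _ _ HI HL) as HL'.
pose proof (is_RInt_gen_unique _ _ HC) as E1.
pose proof (is_RInt_gen_unique _ _ HL') as E2.
rewrite E2 in E1. unfold minus, plus, opp, scal in E1; simpl in E1; unfold mult in E1; simpl in E1.
unfold G in E1. replace g with (alpha + INR (S k)) in E1 by (unfold g; rewrite S_INR; ring).
rewrite rpow_mulpow in E1. lra.
Qed.
End Moments.

Lemma lsum_abs_bound (c : nat -> R) x n' : 1 <= x -> forall m, (m <= S n')%nat ->
  Rabs (lsum (fun k => c k * x ^ k) m) <= lsum (fun k => Rabs (c k)) m * x ^ n'.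
Proof.
intros Hx m. induction m as [|m IH]; intros Hm; simpl.
- rewrite Rabs_R0; lra.
- eapply Rle_trans; [apply Rabs_triang|].
  assert (Hp : x ^ m <= x ^ n') by (apply Rle_pow; auto; lia).
  rewrite Rabs_mult, (Rabs_pos_eq (x ^ m)) by (apply pow_le; lra).
  assert (IH' := IH ltac:(lia)).
  assert (0 <= Rabs (c m)) by apply Rabs_pos.
  rewrite Rmult_plus_distr_r.
  apply Rplus_le_compat; auto. apply Rmult_le_compat_l; auto.
Qed.

Lemma lsum_nonneg (f : nat -> R) m : (forall k, 0 <= f k) -> 0 <= lsum f m.
Proof. intros H; induction m; simpl; [lra| specialize (H m); lra]. Qed.

Lemma monic_ge1 c n x : 1 + lsum (fun k => Rabs (c n k)) n <= x -> 1 <= monicP c n x.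
Proof.
intros Hx. unfold monicP.
destruct n as [|n'].
- simpl; lra.
- set (S0 := lsum (fun k => Rabs (c (S n') k)) (S n')) in *.
  assert (HS : 0 <= S0) by (apply lsum_nonneg; intros; apply Rabs_pos).
  assert (H1 : 1 <= x) by lra.
  pose proof (lsum_abs_bound (c (S n')) x n' H1 (S n') (le_n _)) as Hb. fold S0 in Hb.
  apply Rabs_le_between in Hb. destruct Hb as [Hb _].
  pose proof (pow_R1_Rle x n' H1) as Hp.
  assert (0 <= (x - S0 - 1) * x ^ n') by (apply Rmult_le_pos; lra).
  change (x ^ S n') with (x * x ^ n'). nra.
Qed.

Lemma gen_lower (f : R -> R) l m M :
  is_RInt_gen f (at_point 0) (Rbar_locally p_infty) l ->
  (forall b y, M < b -> is_RInt f 0 b y -> m <= y) -> m <= l.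
Proof.
intros H Hb. destruct (Rle_or_lt m l) as [|Hlt]; auto. exfalso.
specialize (H (ball l (mkposreal (m - l) ltac:(lra))) (locally_ball _ _)).
destruct H as [Q R0 HQ HR HP].
destruct HR as [M' HM'].
set (b := Rmax M M' + 1).
destruct (HP 0 b HQ (HM' b ltac:(unfold b; generalize (Rmax_r M M'); lra))) as [y [Hy Hball]].
simpl in Hy. specialize (Hb b y ltac:(unfold b; generalize (Rmax_l M M'); lra) Hy).
unfold ball in Hball; simpl in Hball; unfold AbsRing_ball, abs, minus, plus, opp in Hball; simpl in Hball.
apply Rabs_lt_between' in Hball. lra.
Qed.

Lemma weight_nonneg alpha A B t x : 0 <= A -> 0 < B -> 0 <= weight alpha A B t x.
Proof.
intros HA HB. unfold weight. apply Rmult_le_pos. apply Rmult_le_pos. apply rpow_nonneg.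
left; apply exp_pos. unfold theta; destruct (Rlt_dec 0 (x - t)); nra.
Qed.

Lemma h_pos alpha A B t c hn n : 0 < alpha -> 0 <= A -> 0 < B -> 0 < t ->
  is_RInt_gen (fun x => monicP c n x * monicP c n x * weight alpha A B t x)
    (at_point 0) (Rbar_locally p_infty) hn -> 0 < hn.
Proof.
intros Ha HA HB Ht H.
set (f := fun x => monicP c n x * monicP c n x * weight alpha A B t x) in *.
set (T := Rmax (1 + lsum (fun k => Rabs (c n k)) n) (t + 1)).
assert (HT1 : 1 + lsum (fun k => Rabs (c n k)) n <= T) by apply Rmax_l.
assert (HT2 : t + 1 <= T) by apply Rmax_r.
assert (HS : 0 <= lsum (fun k => Rabs (c n k)) n) by (apply lsum_nonneg; intros; apply Rabs_pos).
set (m := B * exp (- (T + 1))).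
assert (Hm : 0 < m) by (unfold m; apply Rmult_lt_0_compat; auto; apply exp_pos).
assert (Hf0 : forall x, 0 <= f x).
{ intros x; unfold f. apply Rmult_le_pos. apply Rle_0_sqr. apply weight_nonneg; auto. }
assert (Hfm : forall x, T <= x <= T + 1 -> m <= f x).
{ intros x [Hx1 Hx2]. unfold f, weight, m.
  assert (HP := monic_ge1 c n x ltac:(lra)).
  assert (Hr : 1 <= rpow x alpha).
  { rewrite rpow_gt0 by lra. rewrite <- (Rpower_O x) by lra. apply Rle_Rpower; lra. }
  assert (He : exp (- (T + 1)) <= exp (- x)).
  { destruct (Req_dec x (T + 1)) as [->|Hne]; [lra|]. left; apply exp_increasing; lra. }
  rewrite theta_pos by lra.
  assert (0 < exp (- (T + 1))) by apply exp_pos.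
  assert (1 <= monicP c n x * monicP c n x) by nra.
  assert (0 < exp (- x)) by apply exp_pos.
  assert (E1 : exp (- x) <= rpow x alpha * exp (- x)).
  { rewrite <- (Rmult_1_l (exp (- x))) at 1; apply Rmult_le_compat_r; lra. }
  assert (E2 : B * exp (- (T + 1)) <= rpow x alpha * exp (- x) * (A + B * 1)).
  { rewrite Rmult_comm. apply Rmult_le_compat; lra. }
  eapply Rle_trans; [apply E2|].
  rewrite <- (Rmult_1_l (rpow x alpha * exp (- x) * (A + B * 1))) at 1.
  apply Rmult_le_compat_r; [|lra]. eapply Rle_trans; [|apply E2]. left; apply Rmult_lt_0_compat; auto. }
apply Rlt_le_trans with m; auto.
apply (gen_lower f hn m (T + 1) H).
intros b y Hb Hy.
assert (HE : ex_RInt f 0 b) by (exists y; auto).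
rewrite <- (is_RInt_unique _ _ _ _ Hy).
assert (E1 : ex_RInt f 0 T) by (apply (ex_RInt_Chasles_1 f 0 T b); auto; lra).
assert (E2 : ex_RInt f T b) by (apply (ex_RInt_Chasles_2 f 0 T b); auto; lra).
assert (E3 : ex_RInt f T (T + 1)) by (apply (ex_RInt_Chasles_1 f T (T + 1) b); auto; lra).
assert (E4 : ex_RInt f (T + 1) b) by (apply (ex_RInt_Chasles_2 f T (T + 1) b); auto; lra).
rewrite <- (RInt_Chasles _ _ T _ E1 E2), <- (RInt_Chasles _ _ (T + 1) _ E3 E4).
assert (I1 : 0 <= RInt f 0 T) by (apply RInt_ge_0; auto; lra).
assert (I2 : 0 <= RInt f (T + 1) b) by (apply RInt_ge_0; auto; lra).
assert (I3 : RInt (fun _ => m) T (T + 1) <= RInt f T (T + 1)).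
{ apply RInt_le; auto. lra. apply ex_RInt_const. intros x Hx; apply Hfm; lra. }
rewrite RInt_const in I3. unfold scal in I3; simpl in I3; unfold mult in I3; simpl in I3.
unfold plus; simpl. nra.
Qed.

Lemma monic0 c x : monicP c O x = 1.
Proof. unfold monicP; simpl; ring. Qed.

Lemma hyp0 alpha A B t c h : orthonormed alpha A B t c h -> forall j,
  is_RInt_gen (fun x => monicP c j x * weight alpha A B t x) (at_point 0) (Rbar_locally p_infty)
    (if Nat.eqb j 0 then h j else 0).
Proof.
intros H j.
assert (E : forall x, monicP c j x * monicP c O x * weight alpha A B t x = monicP c j x * weight alpha A B t x)
  by (intros x; rewrite monic0, Rmult_1_r; reflexivity).
exact (is_RInt_gen_exteq _ _ _ _ _ E (H j O)).
Qed.

Notation F0 := (at_point 0).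
Notation Finf := (Rbar_locally p_infty).

Lemma gen_correct (f : R -> R) : ex_RInt_gen f F0 Finf -> is_RInt_gen f F0 Finf (RInt_gen f F0 Finf).
Proof. intros H. exact (RInt_gen_correct (V := R_CompleteNormedModule) f H). Qed.

Lemma gen_uniq (f : R -> R) l1 l2 : is_RInt_gen f F0 Finf l1 -> is_RInt_gen f F0 Finf l2 -> l1 = l2.
Proof.
intros H1 H2. rewrite <- (is_RInt_gen_unique _ _ H1). apply is_RInt_gen_unique; auto.
Qed.

Lemma gen_plus (f g : R -> R) l1 l2 : is_RInt_gen f F0 Finf l1 -> is_RInt_gen g F0 Finf l2 ->
  is_RInt_gen (fun x => f x + g x) F0 Finf (l1 + l2).
Proof. intros H1 H2. apply (is_RInt_gen_plus _ _ _ _ H1 H2). Qed.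

Lemma gen_scal (f : R -> R) k l : is_RInt_gen f F0 Finf l ->
  is_RInt_gen (fun x => k * f x) F0 Finf (k * l).
Proof. intros H. apply (is_RInt_gen_scal _ k _ H). Qed.

Lemma gen_ext (f g : R -> R) l : (forall x, f x = g x) -> is_RInt_gen f F0 Finf l -> is_RInt_gen g F0 Finf l.
Proof. intros E H. apply (is_RInt_gen_exteq f g _ _ l E H). Qed.

Lemma final_alg (n al t W hn hm pn pm a S : R) : 0 < t -> 0 < hn -> 0 < hm ->
  - a = n ^ 2 + n * al + t * S ->
  - a * hm = hn - t * W * (pn * pm) ->
  (- (n * hm) - W * (pn * pm)) * (- (n * hm) - W * (pn * pm) - al * hm)
    = (hn - W * pn ^ 2) * (hm - W * pm ^ 2) ->
  let Rn := W * pn ^ 2 / hn in let Rm := W * pm ^ 2 / hm in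
  let r := W * pn * pm / hm in let beta := hn / hm in
  r ^ 2 = beta * Rn * Rm /\
  (n + r) * (n + al + r) = beta * (1 - Rn) * (1 - Rm) /\
  S + r * (1 - al / t - 2 * (n + r) / t) = beta / t * ((1 - Rn) * Rm + (1 - Rm) * Rn).
Proof.
intros Ht Hn Hm K1 K2 K3 Rn Rm r beta.
assert (T1 : r ^ 2 = beta * Rn * Rm) by (unfold r, beta, Rn, Rm; field; lra).
assert (T2 : (n + r) * (n + al + r) = beta * (1 - Rn) * (1 - Rm)).
{ unfold r, beta, Rn, Rm.
  apply (Rmult_eq_reg_l (hm * hm)); [|nra].
  replace (hm * hm * ((n + W * pn * pm / hm) * (n + al + W * pn * pm / hm)))
    with ((- (n * hm) - W * (pn * pm)) * (- (n * hm) - W * (pn * pm) - al * hm)) by (field; lra).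
  rewrite K3. field; lra. }
split; [exact T1|split; [exact T2|]].
assert (Ea : - a = beta - t * r) by (unfold beta, r; apply (Rmult_eq_reg_r hm); [|lra]; rewrite K2; field; lra).
assert (ES : S = (beta - t * r - n ^ 2 - n * al) / t) by (apply (Rmult_eq_reg_l t); [|lra]; field_simplify; lra).
rewrite ES.
apply (Rmult_eq_reg_l t); [|lra].
replace (t * ((beta - t * r - n ^ 2 - n * al) / t + r * (1 - al / t - 2 * (n + r) / t)))
  with (beta - n ^ 2 - n * al - r * al - 2 * n * r - 2 * r ^ 2) by (field; lra).
replace (t * (beta / t * ((1 - Rn) * Rm + (1 - Rm) * Rn))) with (beta * (Rm + Rn) - 2 * (beta * Rn * Rm)) by (field; lra).
rewrite <- T1.
assert (E2 : beta * (1 - Rn) * (1 - Rm) = beta - beta * (Rm + Rn) + beta * Rn * Rm) by ring.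
rewrite E2, <- T1 in T2. nra.
Qed.

End Ana.

Module Alg.
From HB Require Import structures.
From mathcomp Require Import all_boot all_order all_algebra.
From mathcomp Require Import Rstruct.
From mathcomp Require Import ring lra.
Import GRing.Theory Num.Theory.
Local Open Scope ring_scope.

Section Alg.
Variables (mu : nat -> R) (alpha t W : R) (c : nat -> nat -> R) (h : nat -> R).

Definition Lp (p : {poly R}) : R := \sum_(i < size p) p`_i * mu i.

Lemma Lp_wide N (p : {poly R}) : (size p <= N)%N -> Lp p = \sum_(i < N) p`_i * mu i.
Proof.
move=> hN; rewrite /Lp (big_ord_widen N (fun i => p`_i * mu i)) //.
rewrite big_mkcond; apply: eq_bigr => i _; case: ifP => // /negbT.
by rewrite -leqNgt => /(nth_default 0) ->; rewrite mul0r.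
Qed.

Lemma LpD (p q : {poly R}) : Lp (p + q) = Lp p + Lp q.
Proof.
rewrite (@Lp_wide _ _ (size_polyD p q)) (@Lp_wide (maxn (size p) (size q)) p) ?leq_maxl //.
rewrite (@Lp_wide (maxn (size p) (size q)) q) ?leq_maxr // -big_split /=.
by apply: eq_bigr => i _; rewrite coefD mulrDl.
Qed.

Lemma LpZ a (p : {poly R}) : Lp (a *: p) = a * Lp p.
Proof.
rewrite (@Lp_wide _ _ (size_scale_leq a p)) /Lp mulr_sumr.
by apply: eq_bigr => i _; rewrite coefZ mulrA.
Qed.

Lemma LpC a (p : {poly R}) : Lp (a%:P * p) = a * Lp p.
Proof. by rewrite mul_polyC LpZ. Qed.

Lemma Lp0 : Lp 0 = 0.
Proof. by rewrite /Lp size_poly0 big_ord0. Qed.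

Lemma LpN (p : {poly R}) : Lp (- p) = - Lp p.
Proof. by rewrite -scaleN1r LpZ mulN1r. Qed.

Lemma LpB (p q : {poly R}) : Lp (p - q) = Lp p - Lp q.
Proof. by rewrite LpD LpN. Qed.

Lemma Lp_sum m (F : nat -> {poly R}) : Lp (\sum_(i < m) F i) = \sum_(i < m) Lp (F i).
Proof.
elim: m => [|m IH]; first by rewrite !big_ord0 Lp0.
by rewrite !big_ord_recr /= LpD IH.
Qed.

Lemma LpXn k : Lp 'X^k = mu k.
Proof.
rewrite /Lp size_polyXn big_ord_recr /= big1 ?add0r.
  by rewrite coefXn eqxx mul1r.
by move=> i _; rewrite coefXn (ltn_eqF (ltn_ord i)) mul0r.
Qed.

Hypothesis Hmu : forall k : nat, mu k.+1 = (k%:R + alpha + 1) * mu k + W * t ^+ k.+1.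

Lemma ibp_mono a k : let p := a *: 'X^k in
  Lp ('X * p^`()) = Lp ('X * p) - (alpha + 1) * Lp p - t * W * p.[t].
Proof.
move=> p; subst p; rewrite derivZ derivXn -scalerAr -scalerAr !LpZ hornerZ hornerXn.
rewrite -exprS LpXn.
case: k => [|k] /=.
  rewrite mulr0n mulr0 Lp0 LpXn Hmu expr1; ring.
rewrite mulrnAr -exprS -scaler_nat LpZ !LpXn (Hmu k.+1) exprS; ring.
Qed.

Lemma ibp_sum n (E : nat -> R) : let p := \sum_(i < n) E i *: 'X^i in
  Lp ('X * p^`()) = Lp ('X * p) - (alpha + 1) * Lp p - t * W * p.[t].
Proof.
elim: n => [|n IH] /=.
  by rewrite big_ord0 deriv0 mulr0 Lp0 horner0; ring.
rewrite big_ord_recr /= derivD !mulrDr !LpD hornerD IH ibp_mono; ring.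
Qed.

Lemma ibp (p : {poly R}) : Lp ('X * p^`()) = Lp ('X * p) - (alpha + 1) * Lp p - t * W * p.[t].
Proof.
have -> : p = \sum_(i < size p) p`_i *: 'X^i by rewrite -poly_def coefK.
exact: ibp_sum.
Qed.
Definition P n : {poly R} := 'X^n + \poly_(k < n) c n k.

Lemma size_P n : size (P n) = n.+1.
Proof.
rewrite /P size_polyDl size_polyXn //.
by apply: (leq_ltn_trans (size_poly _ _)).
Qed.

Lemma coef_P n i : (P n)`_i = if (i < n)%N then c n i else (i == n)%:R.
Proof.
rewrite /P coefD coefXn coef_poly.
case: ltnP => hi; first by rewrite (ltn_eqF hi) add0r.
by rewrite addr0.
Qed.

Lemma P_top n : (P n)`_n = 1.
Proof. by rewrite coef_P ltnn eqxx. Qed.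

Lemma size_drop1 (p : {poly R}) m : (size p <= m.+1)%N -> p`_m = 0 -> (size p <= m)%N.
Proof.
move=> hs hm; apply/leq_sizeP => j; rewrite leq_eqVlt => /orP[/eqP <- //|hj].
by move/leq_sizeP: hs; apply.
Qed.

Lemma size_rem (q : {poly R}) m : (size q <= m.+1)%N -> (size (q - q`_m *: P m)%R <= m)%N.
Proof.
move=> hq; apply: size_drop1.
  apply: (leq_trans (size_polyD _ _)); rewrite geq_max hq /=.
  by rewrite size_polyN (leq_trans (size_scale_leq _ _)) // size_P.
by rewrite coefB coefZ P_top mulr1 subrr.
Qed.

Hypothesis Horth : forall n m, Lp (P n * P m) = if n == m then h n else 0.

Lemma orth m (q : {poly R}) : (size q <= m)%N -> forall n, (m <= n)%N -> Lp (P n * q) = 0.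
Proof.
elim: m q => [|m IH] q hq n hn.
  by move: hq; rewrite size_poly_leq0 => /eqP ->; rewrite mulr0 Lp0.
have -> : q = q`_m *: P m + (q - q`_m *: P m) by rewrite addrC subrK.
rewrite mulrDr LpD -scalerAr LpZ Horth IH //; last exact: ltnW.
  by rewrite (gtn_eqF hn) mulr0 addr0.
exact: size_rem.
Qed.

Lemma top n (q : {poly R}) : (size q <= n.+1)%N -> Lp (P n * q) = q`_n * h n.
Proof.
move=> hq.
have -> : q = q`_n *: P n + (q - q`_n *: P n) by rewrite addrC subrK.
rewrite mulrDr LpD -scalerAr LpZ Horth eqxx (orth _ _ (size_rem q n hq)) // addr0.
by rewrite coefD coefZ P_top mulr1 coefB coefZ P_top mulr1 subrr addr0.
Qed.

Lemma size_der n : (size (P n)^`() <= n)%N.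
Proof.
apply/leq_sizeP => j hj; rewrite coef_deriv coef_P.
have h1 : (n < j.+1)%N by [].
by rewrite ltnNge (ltnW h1) /= (gtn_eqF h1) mul0rn.
Qed.

Lemma size_Xq {q : {poly R}} {k : nat} : (size q <= k)%N -> (size ('X * q)%R <= k.+1)%N.
Proof.
move=> hq; apply/leq_sizeP => j hj; rewrite coefXM.
case: j hj => [//|j] /= hj; by move/leq_sizeP: hq; apply.
Qed.

Lemma coef_XPder n : ('X * (P n)^`())`_n = n%:R.
Proof. by rewrite coefXM; case: n => [//|n] /=; rewrite coef_deriv P_top. Qed.

Lemma F1 n : Lp ('X * (P n * P n)) = (2 * n%:R + 1 + alpha) * h n + t * W * (P n).[t] ^+ 2.
Proof.
have H := ibp (P n * P n).
have L1 : Lp ('X * (P n * P n)^`()) = 2 * (n%:R * h n).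
  rewrite derivM mulrDr LpD.
  have -> : 'X * ((P n)^`() * P n) = P n * ('X * (P n)^`()) by ring.
  have -> : 'X * (P n * (P n)^`()) = P n * ('X * (P n)^`()) by ring.
  rewrite top ?coef_XPder; [ring | exact: size_Xq (size_der n)].
rewrite L1 Horth eqxx hornerM in H.
have -> : Lp ('X * (P n * P n)) = 2 * (n%:R * h n) + (alpha + 1) * h n
  + t * W * ((P n).[t] * (P n).[t]) by rewrite H; ring.
ring.
Qed.

Definition a j := ('X * P j)`_j.

Lemma Tel j : Lp ('X * (P j * P j)) = (a j - a j.+1) * h j.
Proof.
rewrite mulrA (mulrC 'X) -mulrA.
have -> : 'X * P j = P j.+1 + ('X * P j - P j.+1) by rewrite addrC subrK.
rewrite mulrDr LpD Horth (ltn_eqF (ltnSn j)) add0r top.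
  by rewrite coefB /a coefXM /= coefXM.
apply: size_drop1.
  apply: (leq_trans (size_polyD _ _)); rewrite geq_max size_polyN size_P leqnn andbT.
  by apply: size_Xq; rewrite size_P.
by rewrite coefB coefXM /= !P_top subrr.
Qed.

Lemma a0 : a 0 = 0.
Proof. by rewrite /a coefXM. Qed.

Hypothesis Hh : forall n, h n != 0.

Lemma diff_a j : a j - a j.+1 = 2 * j%:R + 1 + alpha + t * (W * (P j).[t] ^+ 2 / h j).
Proof.
have := F1 j; rewrite Tel => H.
apply: (mulIf (Hh j)); rewrite H; field; exact: Hh.
Qed.

Lemma sum_a n : - a n = n%:R ^+ 2 + n%:R * alpha + t * \sum_(j < n) (W * (P j).[t] ^+ 2 / h j).
Proof.
elim: n => [|n IH]; first by rewrite a0 big_ord0 oppr0 mulr0; ring.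
have := diff_a n; rewrite big_ord_recr /= -natr1 => H.
have -> : - a n.+1 = - a n + (a n - a n.+1) by ring.
rewrite IH H; ring.
Qed.

Lemma F2 m : - (P m.+1)`_m * h m = h m.+1 - t * W * ((P m.+1).[t] * (P m).[t]).
Proof.
have H := ibp (P m.+1 * P m).
have L1 : Lp ('X * (P m.+1 * P m)^`()) = - (P m.+1)`_m * h m.
  rewrite derivM mulrDr LpD.
  have -> : 'X * (P m.+1 * (P m)^`()) = P m.+1 * ('X * (P m)^`()) by ring.
  rewrite (orth _ _ (size_Xq (size_der m))) // addr0.
  have -> : 'X * ((P m.+1)^`() * P m) = P m * ('X * (P m.+1)^`()) by ring.
  set q := 'X * (P m.+1)^`().
  have -> : q = (m.+1)%:R *: P m.+1 + (q - (m.+1)%:R *: P m.+1) by rewrite addrC subrK.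
  rewrite mulrDr LpD -scalerAr LpZ Horth ltn_eqF // mulr0 add0r top; last first.
    apply: size_drop1.
      apply: (leq_trans (size_polyD _ _)); rewrite geq_max size_polyN.
      rewrite (leq_trans (size_scale_leq _ _)) ?size_P // andbT.
      exact: size_Xq (size_der _).
    by rewrite coefB coefZ P_top mulr1 /q coef_XPder subrr.
  rewrite coefB coefZ /q coefXM.
  case: m {H q} => [|m] /=; first by ring.
  rewrite coef_deriv -mulr_natr; ring.
have L2 : Lp ('X * (P m.+1 * P m)) = h m.+1.
  have -> : 'X * (P m.+1 * P m) = P m.+1 * ('X * P m) by ring.
  rewrite top; first by rewrite coefXM /= P_top mul1r.
  by apply: size_Xq; rewrite size_P.
rewrite L1 L2 Horth (gtn_eqF (ltnSn m)) hornerM in H.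
rewrite H; ring.
Qed.

Definition Nf (p : {poly R}) := Lp p - Lp p^`() - W * p.[t].

Lemma NfD (p q : {poly R}) : Nf (p + q) = Nf p + Nf q.
Proof. by rewrite /Nf derivD !LpD hornerD; ring. Qed.

Lemma NfC a (p : {poly R}) : Nf (a%:P * p) = a * Nf p.
Proof. by rewrite /Nf !mul_polyC derivZ !LpZ hornerZ; ring. Qed.

Lemma NfX q : Nf ('X * q) = alpha * Lp q.
Proof.
have H := ibp q.
by rewrite /Nf derivM derivX mul1r LpD H hornerM hornerX; ring.
Qed.

Definition Qd (p : {poly R}) := \poly_(i < (size p).-1) p`_i.+1.

Lemma Qd_dec (p : {poly R}) : p = (p`_0)%:P + 'X * Qd p.
Proof.
apply/polyP => i; rewrite coefD coefC coefXM.
case: i => [|i] /=; first by rewrite addr0.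
rewrite add0r coef_poly; case: ltnP => // hi.
by apply: nth_default; move: hi; case: (size p).
Qed.

Lemma size_QdP n : (size (Qd (P n)) <= n)%N.
Proof. by rewrite /Qd size_P; apply: size_poly. Qed.

Lemma Qd_top m : (Qd (P m.+1))`_m = 1.
Proof. by rewrite /Qd coef_poly size_P /= ltnSn P_top. Qed.

Lemma Nprod i j : Nf (P i * P j) = (P i)`_0 * Nf (P j) + alpha * Lp (Qd (P i) * P j).
Proof.
by rewrite {1}(Qd_dec (P i)) mulrDl NfD NfC -mulrA NfX.
Qed.

Lemma Vnn n : Nf (P n * P n) = h n - W * (P n).[t] ^+ 2.
Proof.
rewrite /Nf Horth eqxx derivM LpD hornerM (mulrC _ (P n)).
by rewrite (orth _ _ (size_der n)) // addr0; ring.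
Qed.

Lemma Vnm m : Nf (P m.+1 * P m) = - (m.+1%:R * h m) - W * ((P m.+1).[t] * (P m).[t]).
Proof.
rewrite /Nf Horth (gtn_eqF (ltnSn m)) derivM LpD hornerM.
rewrite (orth _ _ (size_der m)) // addr0 (mulrC _ (P m)) top; last first.
  by apply: (leq_trans (size_der _)).
by rewrite coef_deriv P_top; ring.
Qed.

Lemma K3 m : (- (m.+1%:R * h m) - W * ((P m.+1).[t] * (P m).[t])) *
   (- (m.+1%:R * h m) - W * ((P m.+1).[t] * (P m).[t]) - alpha * h m)
   = (h m.+1 - W * (P m.+1).[t] ^+ 2) * (h m - W * (P m).[t] ^+ 2).
Proof.
rewrite -Vnm -!Vnn.
have e1 : Nf (P m.+1 * P m.+1) = (P m.+1)`_0 * Nf (P m.+1).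
  rewrite Nprod [Qd _ * _]mulrC (orth _ _ (size_QdP _)) //; ring.
have e2 : Nf (P m.+1 * P m) = (P m.+1)`_0 * Nf (P m) + alpha * h m.
  rewrite Nprod [Qd _ * _]mulrC top ?Qd_top ?mul1r //; exact: size_QdP.
have e3 : Nf (P m.+1 * P m) = (P m)`_0 * Nf (P m.+1).
  rewrite [P m.+1 * P m]mulrC Nprod [Qd _ * _]mulrC (orth _ _ (size_QdP _)) //; ring.
have e4 : Nf (P m * P m) = (P m)`_0 * Nf (P m).
  rewrite Nprod [Qd _ * _]mulrC (orth _ _ (size_QdP _)) //; ring.
rewrite e1 e4.
have -> : Nf (P m.+1 * P m) - alpha * h m = (P m.+1)`_0 * Nf (P m) by rewrite e2; ring.
rewrite e3; ring.
Qed.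

End Alg.

Section Conn.
Variables (alpha A B t : R) (c : nat -> nat -> R) (h : nat -> R).
Hypotheses (Ha : Rlt 0 alpha) (HA : Rle 0 A) (HB : Rlt 0 B) (Ht : Rlt 0 t)
  (Hort : orthonormed alpha A B t c h).

Lemma lsum_big (f : nat -> R) n : lsum f n = \sum_(i < n) f i.
Proof. elim: n => [|n IH] /=; first by rewrite big_ord0. by rewrite big_ord_recr /= IH. Qed.

Lemma hornerP n x : (P c n).[x] = Defs.monicP c n x.
Proof.
rewrite /P /Defs.monicP hornerD hornerXn horner_poly lsum_big RpowE.
congr (_ + _); apply: eq_bigr => i _; by rewrite RpowE.
Qed.

Definition w := weight alpha A B t.

Lemma isP j : is_RInt_gen (fun x => (P c j).[x] * w x) Ana.F0 Ana.Finf (if Nat.eqb j 0 then h j else 0%R).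
Proof.
apply: (Ana.gen_ext _ _ _ _ (Ana.hyp0 _ _ _ _ _ _ Hort j)).
by move=> x; rewrite hornerP.
Qed.

Lemma exAll_n n (p : {poly R}) : (size p <= n)%N ->
  exists l, is_RInt_gen (fun x => p.[x] * w x) Ana.F0 Ana.Finf l.
Proof.
elim: n p => [|n IH] p hp.
  move: hp; rewrite size_poly_leq0 => /eqP ->.
  exists (0 * (if Nat.eqb 0 0 then h 0%N else 0%R)).
  apply: (Ana.gen_ext _ _ _ _ (Ana.gen_scal _ 0 _ (isP 0))).
  by move=> x; rewrite horner0 RmultE !mul0r.
have [l2 H2] := IH _ (size_rem c p n hp).
exists (p`_n * (if Nat.eqb n 0 then h n else 0%R) + l2).
apply: (Ana.gen_ext _ _ _ _ (Ana.gen_plus _ _ _ _ (Ana.gen_scal _ p`_n _ (isP n)) H2)).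
move=> x; rewrite (hornerD p) hornerN hornerZ !RmultE !RplusE; ring.
Qed.

Definition mu k := RInt_gen (fun x => pow x k * w x) Ana.F0 Ana.Finf.

Lemma isMu k : is_RInt_gen (fun x => pow x k * w x) Ana.F0 Ana.Finf (mu k).
Proof.
apply: Ana.gen_correct.
have [l Hl] := exAll_n k.+1 ('X^k) (eq_leq (size_polyXn R k)).
exists l; apply: (Ana.gen_ext _ _ _ _ Hl).
by move=> x; rewrite hornerXn RpowE.
Qed.

Lemma isAll_n (p : {poly R}) n : is_RInt_gen (fun x => (\sum_(i < n) p`_i * pow x i) * w x) Ana.F0 Ana.Finf
  (\sum_(i < n) p`_i * mu i).
Proof.
elim: n => [|n IH].
  rewrite big_ord0 -(mul0r (mu 0)).
  apply: (Ana.gen_ext _ _ _ _ (Ana.gen_scal _ 0 _ (isMu 0))).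
  by move=> x; rewrite !big_ord0 RmultE !mul0r.
rewrite big_ord_recr /=.
apply: (Ana.gen_ext _ _ _ _ (Ana.gen_plus _ _ _ _ IH (Ana.gen_scal _ p`_n _ (isMu n)))).
by move=> x; rewrite big_ord_recr /= !RmultE !RplusE; ring.
Qed.

Lemma isAll (p : {poly R}) : is_RInt_gen (fun x => p.[x] * w x) Ana.F0 Ana.Finf (Lp mu p).
Proof.
apply: (Ana.gen_ext _ _ _ _ (isAll_n p (size p))).
by move=> x; rewrite horner_coef; congr (_ * _); apply: eq_bigr => i _; rewrite RpowE.
Qed.

Lemma Horth_alg n m : Lp mu (P c n * P c m) = if n == m then h n else 0.
Proof.
have H1 := isAll (P c n * P c m).
have H2' : is_RInt_gen (fun x => (P c n * P c m).[x] * w x) Ana.F0 Ana.Finf (if Nat.eqb n m then h n else 0%R).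
  apply: (Ana.gen_ext _ _ _ _ (Hort n m)).
  by move=> x; rewrite hornerM !hornerP.
rewrite (Ana.gen_uniq _ _ _ H1 H2').
by case: (Nat.eqb_spec n m) => [->|/eqP/negbTE ->]; rewrite ?eqxx.
Qed.

Lemma hpos n : Rlt 0 (h n).
Proof.
apply: (Ana.h_pos alpha A B t c (h n) n Ha HA HB Ht).
have := Hort n n; by rewrite Nat.eqb_refl.
Qed.

Lemma Hh n : h n != 0.
Proof. apply/eqP => E; have := hpos n; rewrite E; apply: Rlt_irrefl. Qed.

Definition WW := B * rpow t alpha * exp (- t).

Lemma Hmu k : mu k.+1 = (k%:R + alpha + 1) * mu k + WW * t ^+ k.+1.
Proof.
rewrite (Ana.moment_rec alpha A B t Ha Ht mu k isMu) INRE RpowE /WW ?R1E.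
by [].
Qed.

Definition acoef m := (P c m.+1)`_m.

Local Close Scope ring_scope.
Local Open Scope R_scope.

Lemma main_conn m :
  0 < h m /\ 0 < h (S m) /\
  exists a,
  - a = INR (S m) ^ 2 + INR (S m) * alpha + t * lsum (RR_n alpha B t c h) (S m) /\
  - a * h m = h (S m) - t * (B * rpow t alpha * exp (- t)) * (Defs.monicP c (S m) t * Defs.monicP c m t) /\
  (- (INR (S m) * h m) - (B * rpow t alpha * exp (- t)) * (Defs.monicP c (S m) t * Defs.monicP c m t)) *
   (- (INR (S m) * h m) - (B * rpow t alpha * exp (- t)) * (Defs.monicP c (S m) t * Defs.monicP c m t) - alpha * h m)
   = (h (S m) - (B * rpow t alpha * exp (- t)) * Defs.monicP c (S m) t ^ 2) *
     (h m - (B * rpow t alpha * exp (- t)) * Defs.monicP c m t ^ 2).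
Proof.
split; [apply hpos|split; [apply hpos|]].
exists (acoef m); rewrite /acoef.
have H1 := sum_a mu alpha t WW c h Hmu Horth_alg Hh m.+1.
have H2 := F2 mu alpha t WW c h Hmu Horth_alg m.
have H3 := K3 mu alpha t WW c h Hmu Horth_alg m.
rewrite /a coefXM /= in H1.
rewrite !hornerP in H2 H3.
split; [|split].
- rewrite !RoppE H1 !RplusE !RmultE INRE RpowE lsum_big /WW.
  congr (_ + _ + _ * _); apply: eq_bigr => j _; by rewrite /RR_n hornerP RpowE RdivE.
- exact: H2.
- rewrite INRE !RpowE; exact: H3.
Qed.

End Conn.
End Alg.

Theorem lemma7 (alpha A B t : R) (c : nat -> nat -> R) (h : nat -> R) :
  0 < alpha -> 0 <= A -> 0 < B -> 0 < t ->
  orthonormed alpha A B t c h ->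
  forall n : nat, (1 <= n)%nat ->
    let Rj := RR_n alpha B t c h in
    let r := rr_n alpha B t c h n in
    let beta := betan h n in
    let nn := INR n in
    r ^ 2 = beta * Rj n * Rj (n - 1)%nat /\
    (nn + r) * (nn + alpha + r) = beta * (1 - Rj n) * (1 - Rj (n - 1)%nat) /\
    lsum Rj n + r * (1 - alpha / t - 2 * (nn + r) / t)
      = beta / t * ((1 - Rj n) * Rj (n - 1)%nat + (1 - Rj (n - 1)%nat) * Rj n).
Proof.
intros Ha HA HB Ht Hort n Hn Rj r beta nn.
destruct n as [|m]; [exfalso; lia|].
destruct (Alg.main_conn alpha A B t c h Ha HA HB Ht Hort m) as [Hm [Hn' [a [K1 [K2 K3]]]]].
pose proof (Ana.final_alg (INR (S m)) alpha t (B * rpow t alpha * exp (- t)) (h (S m)) (h m)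
  (monicP c (S m) t) (monicP c m t) a (lsum Rj (S m)) Ht Hn' Hm K1 K2 K3) as F.
cbv zeta in F.
unfold Rj, r, beta, nn, RR_n, rr_n, betan in *.
replace (S m - 1)%nat with m by lia.
exact F.
Qed.
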